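(* Let $(\approx^n_1,\approx^n_2)$ be call-by-name coupled logical bisimilarity. (1) If $M\approx^n_1 N$ then $C[M]\approx^n_1 C[N]$ for every context $C$ such that $C[M],C[N]$ are closed. (2) If $E\approx^n_2 F$ then $\mathcal{E}[E]\approx^n_2\mathcal{E}[F]$ for every call-by-name evaluation context $\mathcal{E}$.
   Context: $\Lambda^\bullet$ is the set of closed $\lambda$-terms. Contexts are generated by $C::=x\mid[\cdot]\mid C\,C\mid\lambda x.C$, possibly with several holes numbered left to right; $C[\widetilde M]$ fills the $i$-th hole with $M_i$; $C[M]$ fills every hole with $M$. For $\mathcal{R}\subseteq\Lambda^\bullet\times\Lambda^\bullet$, $\mathcal{R}^\star=\{(C[\widetilde M],C[\widetilde N]) : C\text{ a context},\ M_i\,\mathcal{R}\,N_i\ \forall i,\ C[\widetilde M],C[\widetilde N]\in\Lambda^\bullet\}$. Call-by-name evaluation contexts: $\mathcal{E}::=[\cdot]\mid\mathcal{E}\,M$ with $M\in\Lambda^\bullet$. Call-by-name reduction on closed terms: $MN\longrightarrow M'N$ if $M\longrightarrow M'$, and $(\lambda x.P)N\longrightarrow P[N/x]$; $\Longrightarrow$ is its reflexive transitive closure. A coupled relation is a pair $(\mathcal{R}_1,\mathcal{R}_2)$ of relations on $\Lambda^\bullet$ with $\mathcal{R}_1\subseteq\mathcal{R}_2$. It is a (call-by-name) coupled logical bisimulation if whenever $M\,\mathcal{R}_2\,N$: (1) if $M\longrightarrow M'$ then there is $N'$ with $N\Longrightarrow N'$ and $M'\,\mathcal{R}_2\,N'$;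 (2) if $M=\lambda x.M'$ then $N\Longrightarrow\lambda x.N'$ for some $N'$ and for all $P,Q\in\Lambda^\bullet$ with $P\,\mathcal{R}_1^\star\,Q$, $M'[P/x]\,\mathcal{R}_2\,N'[Q/x]$; (3) the converses of (1),(2) with $M$ and $N$ exchanged. Coupled logical bisimilarity $(\approx^n_1,\approx^n_2)$ is the componentwise union of all such bisimulations. *)

(* Defs.v *)
(* Pure lambda calculus, locally nameless via de Bruijn indices
   (terms are thus identified up to alpha-conversion, as in the paper). *)
From Stdlib Require Import List Arith.
Import ListNotations.

Inductive term : Type :=
| Var : nat -> term
| App : term -> term -> term
| Lam : term -> term.

Fixpoint closed_at (k : nat) (t : term) : Prop :=
  match t with
  | Var n => n < k
  | App t1 t2 => closed_at k t1 /\ closed_at k t2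
  | Lam t1 => closed_at (S k) t1
  end.
Definition closed (t : term) : Prop := closed_at 0 t.

Fixpoint lift (d c : nat) (t : term) : term :=
  match t with
  | Var n => if n <? c then Var n else Var (n + d)
  | App t1 t2 => App (lift d c t1) (lift d c t2)
  | Lam t1 => Lam (lift d (S c) t1)
  end.

(* subst t k s : replace index k in t by s, decrementing indices above k *)
Fixpoint subst (t : term) (k : nat) (s : term) : term :=
  match t with
  | Var n => if n =? k then lift k 0 s
             else if k <? n then Var (n - 1) else Var n
  | App t1 t2 => App (subst t1 k s) (subst t2 k s)
  | Lam t1 => Lam (subst t1 (S k) s)
  end.

(* M'[P/x] where M = \x.M' : instantiate the bound variable of the body *)
Definition inst (body P : term) : term := subst body 0 P.

Inductive step : term -> term -> Prop :=
| step_app : forall M M' N, step M M' -> step (App M N) (App M' N)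
| step_beta : forall P N, step (App (Lam P) N) (inst P N).

Definition steps : term -> term -> Prop := Relation_Operators.clos_refl_trans term step.

(* multi-hole contexts C ::= x | [.] | C C | \x.C ; holes numbered left to right *)
Inductive ctx : Type :=
| CVar : nat -> ctx
| CHole : ctx
| CApp : ctx -> ctx -> ctx
| CLam : ctx -> ctx.

Fixpoint nholes (C : ctx) : nat :=
  match C with
  | CVar _ => 0
  | CHole => 1
  | CApp C1 C2 => nholes C1 + nholes C2
  | CLam C1 => nholes C1
  end.

Fixpoint fill_aux (C : ctx) (l : list term) : term * list term :=
  match C with
  | CVar n => (Var n, l)
  | CHole => match l with
             | [] => (Var 0, [])   (* never used: lengths are checked *)
             | M :: l' => (M, l')
             end
  | CApp C1 C2 => let (t1, l1) := fill_aux C1 l in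
                  let (t2, l2) := fill_aux C2 l1 in (App t1 t2, l2)
  | CLam C1 => let (t1, l1) := fill_aux C1 l in (Lam t1, l1)
  end.

Definition fill (C : ctx) (l : list term) : term := fst (fill_aux C l).

Fixpoint fill1 (C : ctx) (M : term) : term :=
  match C with
  | CVar n => Var n
  | CHole => M
  | CApp C1 C2 => App (fill1 C1 M) (fill1 C2 M)
  | CLam C1 => Lam (fill1 C1 M)
  end.

Definition rel := term -> term -> Prop.

Definition on_closed (R : rel) : Prop :=
  forall M N, R M N -> closed M /\ closed N.

Definition star (R : rel) : rel := fun M N =>
  exists (C : ctx) (Ms Ns : list term),
    length Ms = nholes C /\ length Ns = nholes C /\
    Forall2 R Ms Ns /\ M = fill C Ms /\ N = fill C Ns /\
    closed M /\ closed N.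

Definition coupled (R1 R2 : rel) : Prop :=
  on_closed R1 /\ on_closed R2 /\ (forall M N, R1 M N -> R2 M N).

Definition lb_progress (R1 R2 : rel) (M N : term) : Prop :=
  (forall M', step M M' -> exists N', steps N N' /\ R2 M' N') /\
  (forall M', M = Lam M' ->
     exists N', steps N (Lam N') /\
       forall P Q, star R1 P Q -> R2 (inst M' P) (inst N' Q)).

Definition coupled_logical_bisim (R1 R2 : rel) : Prop :=
  coupled R1 R2 /\
  forall M N, R2 M N -> lb_progress R1 R2 M N /\ lb_progress (fun x y => R1 y x) (fun x y => R2 y x) N M.

(* coupled logical bisimilarity (approx^n_1, approx^n_2): componentwise union *)
Definition bisim1 : rel := fun M N =>
  exists R1 R2, coupled_logical_bisim R1 R2 /\ R1 M N.
Definition bisim2 : rel := fun M N =>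
  exists R1 R2, coupled_logical_bisim R1 R2 /\ R2 M N.

(* call-by-name evaluation contexts E ::= [.] | E M (M closed):
   represented by the list of closed arguments, E[t] = t M1 ... Mk *)
Definition efill (args : list term) (t : term) : term :=
  fold_left App args t.

(* Main.v *)
Require Import Defs.
From Stdlib Require Import List Arith Lia Relations.
Import ListNotations.

Lemma closed_at_mono : forall t k j, closed_at k t -> k <= j -> closed_at j t.
Proof. induction t; simpl; intros; try tauto; try lia.
  - destruct H; split; eauto.
  - eapply IHt; eauto; lia. Qed.

Lemma lift_closed : forall t d c, closed_at c t -> lift d c t = t.
Proof. induction t; simpl; intros.
  - destruct (Nat.ltb_spec n c); auto; lia.
  - destruct H; rewrite IHt1, IHt2; auto.
  - rewrite IHt; auto. Qed.

Lemma subst_closed : forall t k s, closed_at k t -> subst t k s = t.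
Proof. induction t; simpl; intros.
  - destruct (Nat.eqb_spec n k); [lia|]. destruct (Nat.ltb_spec k n); auto; lia.
  - destruct H; rewrite IHt1, IHt2; auto.
  - rewrite IHt; auto. Qed.

Lemma subst_closed_at : forall t k s, closed_at (S k) t -> closed s -> closed_at k (subst t k s).
Proof. induction t; simpl; intros.
  - destruct (Nat.eqb_spec n k).
    + rewrite lift_closed by auto. eapply closed_at_mono; eauto; lia.
    + destruct (Nat.ltb_spec k n); simpl; lia.
  - destruct H; split; auto.
  - apply IHt; auto. Qed.

Inductive T (R : rel) : term -> term -> Prop :=
| T_var n : T R (Var n) (Var n)
| T_base M N : R M N -> T R M N
| T_app a b c d : T R a b -> T R c d -> T R (App a c) (App b d)
| T_lam a b : T R a b -> T R (Lam a) (Lam b).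

Lemma T_refl : forall R t, T R t t.
Proof. induction t; [apply T_var|apply T_app|apply T_lam]; auto. Qed.

Lemma T_flip : forall R x y, T R x y -> T (fun a b => R b a) y x.
Proof. induction 1; [apply T_var|apply T_base; exact H|apply T_app|apply T_lam]; auto. Qed.

Lemma T_subst : forall R, on_closed R -> forall a b, T R a b -> forall k U V,
  closed U -> closed V -> T R U V -> T R (subst a k U) (subst b k V).
Proof. intros R oc a b H; induction H; intros; simpl.
  - destruct (n =? k); [rewrite !lift_closed by assumption; auto|].
    destruct (k <? n); apply T_var.
  - destruct (oc _ _ H). rewrite !subst_closed; try (eapply closed_at_mono; eauto; lia).
    apply T_base; auto.
  - apply T_app; auto.
  - apply T_lam; auto. Qed.

Lemma T_fill1 : forall R M N C, T R M N -> T R (fill1 C M) (fill1 C N).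
Proof. induction C; simpl; intros; [apply T_var|auto|apply T_app|apply T_lam]; auto. Qed.

Lemma split_list : forall (Ms : list term) n1 n2, length Ms = n1 + n2 ->
  exists Ms1 Ms2, Ms = Ms1 ++ Ms2 /\ length Ms1 = n1 /\ length Ms2 = n2.
Proof. intros. exists (firstn n1 Ms), (skipn n1 Ms). split; [symmetry; apply firstn_skipn|].
  rewrite length_firstn, length_skipn. lia. Qed.

Lemma fill_aux_app : forall C Ms rest, length Ms = nholes C ->
  fill_aux C (Ms ++ rest) = (fill C Ms, rest).
Proof. induction C; simpl; intros.
  - destruct Ms; simpl in *; [reflexivity|lia].
  - destruct Ms as [|M [|]]; simpl in *; try lia. reflexivity.
  - destruct (split_list Ms _ _ H) as (Ms1 & Ms2 & -> & H1 & H2).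
    unfold fill; simpl. rewrite <- app_assoc, IHC1 by auto. rewrite IHC1 by auto.
    rewrite IHC2 by auto. pose proof (IHC2 Ms2 [] H2) as E. rewrite app_nil_r in E.
    rewrite E. reflexivity.
  - unfold fill; simpl. rewrite IHC by auto.
    pose proof (IHC Ms [] H) as E. rewrite app_nil_r in E. rewrite E. reflexivity.
Qed.

Lemma fill_App : forall C1 C2 Ms1 Ms2, length Ms1 = nholes C1 -> length Ms2 = nholes C2 ->
  fill (CApp C1 C2) (Ms1 ++ Ms2) = App (fill C1 Ms1) (fill C2 Ms2).
Proof. intros. unfold fill at 1; simpl. rewrite fill_aux_app by auto.
  pose proof (fill_aux_app C2 Ms2 [] H0) as E. rewrite app_nil_r in E. rewrite E. reflexivity. Qed.

Lemma fill_Lam : forall C Ms, fill (CLam C) Ms = Lam (fill C Ms).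
Proof. intros. unfold fill; simpl. destruct (fill_aux C Ms); reflexivity. Qed.

Lemma T_fill : forall R x y, T R x y -> exists C Ms Ns,
  length Ms = nholes C /\ length Ns = nholes C /\ Forall2 R Ms Ns /\ x = fill C Ms /\ y = fill C Ns.
Proof. induction 1.
  - exists (CVar n), [], []. repeat split; auto.
  - exists CHole, [M], [N]. repeat split; auto.
  - destruct IHT1 as (C1 & Ms1 & Ns1 & ? & ? & ? & -> & ->).
    destruct IHT2 as (C2 & Ms2 & Ns2 & ? & ? & ? & -> & ->).
    exists (CApp C1 C2), (Ms1 ++ Ms2), (Ns1 ++ Ns2). simpl; rewrite !length_app.
    repeat split; try lia; try apply Forall2_app; auto; rewrite fill_App; auto.
  - destruct IHT as (C & Ms & Ns & ? & ? & ? & -> & ->).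
    exists (CLam C), Ms, Ns. repeat split; auto; rewrite fill_Lam; auto.
Qed.

Lemma fill_T : forall R C Ms Ns, length Ms = nholes C -> length Ns = nholes C ->
  Forall2 (T R) Ms Ns -> T R (fill C Ms) (fill C Ns).
Proof. induction C; simpl; intros.
  - destruct Ms, Ns; simpl in *; try lia. apply T_var.
  - destruct Ms as [|M [|]], Ns as [|N [|]]; simpl in *; try lia. inversion H1; auto.
  - destruct (split_list Ms _ _ H) as (Ms1 & Ms2 & -> & H2 & H3).
    destruct (Forall2_app_inv_l _ _ H1) as (Ns1 & Ns2 & F1 & F2 & ->).
    pose proof (Forall2_length F1). pose proof (Forall2_length F2).
    rewrite !fill_App by lia. apply T_app; [apply IHC1|apply IHC2]; auto; lia.
  - rewrite !fill_Lam. apply T_lam; auto.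
Qed.

Lemma steps_App : forall P Q A, steps P Q -> steps (App P A) (App Q A).
Proof. intros P Q A H; induction H.
  - apply rt_step. apply step_app; auto.
  - apply rt_refl.
  - eapply rt_trans; eauto. Qed.

Lemma steps_efill : forall As P Q, steps P Q -> steps (efill As P) (efill As Q).
Proof. induction As; simpl; intros; auto. apply IHAs. apply steps_App; auto. Qed.

Lemma efill_app : forall As c P, efill (As ++ [c]) P = App (efill As P) c.
Proof. intros. unfold efill. rewrite fold_left_app. reflexivity. Qed.

Lemma efill_Lam : forall As P M, efill As P = Lam M -> As = [] /\ P = Lam M.
Proof. induction As; simpl; intros; auto. apply IHAs in H. destruct H; discriminate. Qed.

Lemma step_efill_inv : forall As P X, step (efill As P) X ->
  (exists P', step P P' /\ X = efill As P') \/
  (exists P0 A As', P = Lam P0 /\ As = A :: As' /\ X = efill As' (inst P0 A)).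
Proof. induction As; simpl; intros.
  - left. eauto.
  - destruct (IHAs _ _ H) as [(P' & Hs & ->)|(P0 & A & As' & E & _ & _)]; [|discriminate].
    inversion Hs; subst.
    + left. exists M'. split; auto.
    + right. do 3 eexists. split; [reflexivity|split; reflexivity].
Qed.

Lemma closed_efill : forall As P, Forall closed As -> closed P -> closed (efill As P).
Proof. induction As; simpl; intros; auto. inversion H; subst. apply IHAs; auto. split; auto. Qed.

Definition S1 (R : rel) : rel := fun x y => T R x y /\ closed x /\ closed y.
Definition S2 (R1 R2 : rel) : rel := fun x y => S1 R1 x y \/
  exists As Bs P Q, R2 P Q /\ Forall2 (S1 R1) As Bs /\ x = efill As P /\ y = efill Bs Q.

Lemma S1_star : forall R x y, S1 R x y -> star R x y.
Proof. intros R x y (H & c1 & c2). destruct (T_fill _ _ _ H) as (C & Ms & Ns & ? & ? & ? & ? & ?).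
  exists C, Ms, Ns. subst. repeat split; auto. Qed.

Lemma star_S1 : forall R x y, star (S1 R) x y -> S1 R x y.
Proof. intros R x y (C & Ms & Ns & ? & ? & F & -> & -> & ? & ?). split; [|auto].
  apply fill_T; auto. eapply Forall2_impl; [|exact F]. intros a b [h _]; exact h. Qed.

Lemma star_mono : forall (A B : rel), (forall x y, A x y -> B x y) -> forall x y, star A x y -> star B x y.
Proof. intros A B H x y (C & Ms & Ns & ? & ? & F & ? & ? & ? & ?).
  exists C, Ms, Ns. repeat split; auto. eapply Forall2_impl; eauto. Qed.

Lemma lb_mono : forall A B A' B' x y, (forall p q, star A' p q -> star A p q) ->
  (forall p q, B p q -> B' p q) -> lb_progress A B x y -> lb_progress A' B' x y.
Proof. intros A B A' B' x y HA HB [H1 H2]. split.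
  - intros M' Hs. destruct (H1 _ Hs) as (N' & ? & ?). exists N'; auto.
  - intros M' E. destruct (H2 _ E) as (N' & ? & Hi). exists N'; split; auto. Qed.

Lemma Forall2_S1_closed : forall R As Bs, Forall2 (S1 R) As Bs -> Forall closed As /\ Forall closed Bs.
Proof. induction 1; auto. destruct H as (_ & ? & ?). destruct IHForall2; auto. Qed.

Lemma S2_App : forall R1 R2 a b c d, S2 R1 R2 a b -> S1 R1 c d -> S2 R1 R2 (App a c) (App b d).
Proof. intros R1 R2 a b c d [(H & ca & cb)|(As & Bs & P & Q & HR & F & -> & ->)] (Hc & cc & cd).
  - left. split; [apply T_app; auto|split; split; auto].
  - right. exists (As ++ [c]), (Bs ++ [d]), P, Q. rewrite !efill_app. repeat split; auto.
    apply Forall2_app; auto. constructor; [split; auto|constructor]. Qed.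

Section Bis.
Variables R1 R2 : rel.
Hypothesis LB : coupled_logical_bisim R1 R2.

Lemma oc1 : on_closed R1. Proof. apply LB. Qed.
Lemma oc2 : on_closed R2. Proof. apply LB. Qed.
Lemma inc12 : forall x y, R1 x y -> R2 x y. Proof. apply LB. Qed.
Lemma prog2 : forall x y, R2 x y -> lb_progress R1 R2 x y. Proof. apply LB. Qed.

Lemma R2_S2 : forall x y, R2 x y -> S2 R1 R2 x y.
Proof. intros. right. exists [], [], x, y. repeat split; auto. Qed.

Lemma T_step : forall x y, T R1 x y -> closed x -> closed y ->
  forall x', step x x' -> exists y', steps y y' /\ S2 R1 R2 x' y'.
Proof. induction 1; intros cx cy x' Hs.
  - inversion cx.
  - destruct (prog2 _ _ (inc12 _ _ H)) as [P _]. destruct (P _ Hs) as (y' & ? & ?).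
    exists y'. split; auto. apply R2_S2; auto.
  - destruct cx as [ca cc], cy as [cb cd]. inversion Hs as [a0 a' c0 Ha|P0 c0]; subst.
    + destruct (IHT1 ca cb _ Ha) as (b' & ? & ?). exists (App b' d). split.
      * apply steps_App; auto.
      * apply S2_App; auto. split; auto.
    + inversion H; subst.
      * destruct (prog2 _ _ (inc12 _ _ H1)) as [_ P]. destruct (P _ eq_refl) as (N' & Hst & HI).
        exists (inst N' d). split.
        -- eapply rt_trans; [apply steps_App; exact Hst|]. apply rt_step, step_beta.
        -- apply R2_S2. apply HI. apply S1_star. split; auto.
      * exists (inst b0 d). split; [apply rt_step, step_beta|].
        left. split; [|split].
        -- apply T_subst; auto. apply oc1.
        -- apply subst_closed_at; auto.
        -- apply subst_closed_at; auto.
  - inversion Hs.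
Qed.

Lemma prog_S : forall x y, S2 R1 R2 x y -> lb_progress (S1 R1) (S2 R1 R2) x y.
Proof. intros x y [(H & cx & cy)|(As & Bs & P & Q & HR & F & -> & ->)].
  - split.
    + intros; eapply T_step; eauto.
    + intros M' ->. inversion H; subst.
      * destruct (prog2 _ _ (inc12 _ _ H0)) as [_ Pr]. destruct (Pr _ eq_refl) as (N' & Hst & HI).
        exists N'. split; auto. intros U V HUV. apply R2_S2. apply HI.
        apply S1_star, star_S1; auto.
      * exists b. split; [apply rt_refl|]. intros U V HUV. apply star_S1 in HUV.
        destruct HUV as (HT & cU & cV). left. split; [|split].
        -- apply T_subst; auto. apply oc1.
        -- apply subst_closed_at; auto.
        -- apply subst_closed_at; auto.
  - destruct (prog2 _ _ HR) as [Pst Plam]. split.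
    + intros X Hs. destruct (step_efill_inv _ _ _ Hs) as [(P' & HP & ->)|(P0 & A & As' & -> & -> & ->)].
      * destruct (Pst _ HP) as (Q' & ? & ?). exists (efill Bs Q'). split.
        -- apply steps_efill; auto.
        -- right. exists As, Bs, P', Q'. auto.
      * inversion F; subst. destruct (Plam _ eq_refl) as (N' & Hst & HI).
        exists (efill l' (inst N' y)). split.
        -- eapply rt_trans; [apply steps_efill; exact Hst|]. simpl. apply steps_efill.
           apply rt_step, step_beta.
        -- right. exists As', l', (inst P0 A), (inst N' y). repeat split; auto.
           apply HI, S1_star; auto.
    + intros M' E. apply efill_Lam in E. destruct E as [-> ->]. inversion F; subst.
      destruct (Plam _ eq_refl) as (N' & Hst & HI). exists N'. split; auto.
      intros U V HUV. apply R2_S2, HI, S1_star, star_S1; auto.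
Qed.

End Bis.

Lemma LB_flip : forall R1 R2, coupled_logical_bisim R1 R2 ->
  coupled_logical_bisim (fun x y => R1 y x) (fun x y => R2 y x).
Proof. intros R1 R2 [[o1 [o2 i]] H]. split; [split; [|split]|].
  - intros M N h. destruct (o1 _ _ h); auto.
  - intros M N h. destruct (o2 _ _ h); auto.
  - intros M N h. apply i; auto.
  - intros M N h. destruct (H _ _ h). split; assumption.
Qed.

Lemma S2_flip : forall R1 R2 x y, S2 R1 R2 x y -> S2 (fun a b => R1 b a) (fun a b => R2 b a) y x.
Proof. intros R1 R2 x y [(H & cx & cy)|(As & Bs & P & Q & HR & F & -> & ->)].
  - left. split; [apply T_flip; auto|auto].
  - right. exists Bs, As, Q, P. repeat split; auto.
    clear HR. induction F; constructor; auto. destruct H as (h & ? & ?). split; [apply T_flip; auto|auto].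
Qed.

Lemma LB_S : forall R1 R2, coupled_logical_bisim R1 R2 -> coupled_logical_bisim (S1 R1) (S2 R1 R2).
Proof. intros R1 R2 L. split; [split; [|split]|].
  - intros M N (_ & ? & ?); auto.
  - intros M N [(_ & ? & ?)|(As & Bs & P & Q & HR & F & -> & ->)]; auto.
    destruct (Forall2_S1_closed _ _ _ F). destruct (oc2 _ _ L _ _ HR).
    split; apply closed_efill; auto.
  - intros; left; auto.
  - intros M N H. split.
    + apply prog_S; auto.
    + pose proof (prog_S _ _ (LB_flip _ _ L) _ _ (S2_flip _ _ _ _ H)) as Hp.
      eapply lb_mono; [| |exact Hp].
      * apply star_mono. intros p q (h & ? & ?). split; [apply T_flip; auto|auto].
      * intros p q h. exact (S2_flip _ _ _ _ h).
Qed.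

Theorem mainTheorem7 :
  (forall (M N : term) (C : ctx),
      bisim1 M N -> closed (fill1 C M) -> closed (fill1 C N) ->
      bisim1 (fill1 C M) (fill1 C N)) /\
  (forall (E F : term) (args : list term),
      Forall closed args ->
      bisim2 E F -> bisim2 (efill args E) (efill args F)).
Proof. split.
  - intros M N C (R1 & R2 & L & H) c1 c2. exists (S1 R1), (S2 R1 R2). split; [apply LB_S; auto|].
    split; auto. apply T_fill1, T_base; auto.
  - intros E F args Hc (R1 & R2 & L & H). exists (S1 R1), (S2 R1 R2). split; [apply LB_S; auto|].
    right. exists args, args, E, F. repeat split; auto.
    induction Hc; constructor; auto. split; [apply T_refl|auto].
Qed.
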